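(* Assume the distribution $\mathcal D_2(\lambda)$ defined in the context. Let $G\in\mathcal G_{d,k}$ be a structure in which at least one of $X_a,X_b$ has children other than $X_a,X_b$. Then $\mathcal S(G)<\mathcal S^*-\beta+3d\lambda$.
   Context: Entropies use the natural logarithm; $k$ is a fixed positive integer. For a set of variables, a family is $\langle Y,\Pi\rangle$ with $\Pi$ not containing $Y$ and $|\Pi|\le k$, with $H(\langle Y,\Pi\rangle)=H(Y\mid\Pi)$; DAGs are identified with their sets of families and have score $\mathcal S(G)=-\sum_{f\in G}H(f)$. Markov-equivalent DAGs form equivalence classes (ECs) with a common score. Construction. $\mathcal D_1$ is a distribution over a finite set $\mathbf X_1$ of at least $k$ discrete variables, containing a variable $X_a$, such that for some $\alpha,\beta>0$: (I) among DAGs over $\mathbf X_1$ with in-degree $\le k$ there is a unique optimal EC, with score gap at least $\beta$ to the next-best EC; (II) $X_a$ has no children in any structure of the optimal EC; (III) $H(X_a\mid\mathbf X_1\setminus\{X_a\})=\alpha$. Let $\mathbf X=\mathbf X_1\cup\{X_b\}$, $d=|\mathbf X|$. For $\lambda\in(0,\min(\alpha,\beta/(3d)))$, $\mathcal D_2(\lambda)$ is a distribution on $\mathbf X$ with marginal $\mathcal D_1$ on $\mathbf X_1$ such that: (IV) there is a hidden Bernoulli variable $C$ independent of $\mathbf X_1$ with $P[X_b=X_a\mid C=1]=1$ and $X_b$ independent of $\mathbf X_1$ given $C=0$; (V) $\max(H(X_b\mid X_a),H(X_a\mid X_b))=\lambda$. $\mathcal G_{d,k}$ is the set of DAGs over $\mathbf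 X$ with in-degree at most $k$, scores are computed under $\mathcal D_2(\lambda)$, and $\mathcal S^*=\max_{G\in\mathcal G_{d,k}}\mathcal S(G)$. *)

(* Defs.v *)
From HB Require Import structures.
From mathcomp Require Import all_boot all_order all_algebra.
From mathcomp Require Import reals exp.
Set Implicit Arguments. Unset Strict Implicit. Unset Printing Implicit Defensive.
Import Order.TTheory GRing.Theory Num.Theory.
Local Open Scope ring_scope.

(* Variables are indexed by a finite type V; every variable takes values in a
   common finite type W.  A joint distribution is a function P on the
   (finite) set of full assignments {ffun V -> W}. *)

Section Defs.
Variables (R : realType) (V W : finType).

Definition agree (A : {set V}) (x u : {ffun V -> W}) : bool :=
  [forall v in A, x v == u v].

Definition marg (P : {ffun V -> W} -> R) (A : {set V}) (x : {ffun V -> W}) : R :=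
  \sum_(y | agree A y x) P y.

Definition entropy (P : {ffun V -> W} -> R) (A : {set V}) : R :=
  - \sum_(x : {ffun V -> W}) P x * ln (marg P A x).

Definition condH (P : {ffun V -> W} -> R) (Y : V) (Pi : {set V}) : R :=
  entropy P (Y |: Pi) - entropy P Pi.

(* A structure over the variable set S is given by its parent sets g v, v in S
   (values of g outside S are irrelevant).  Edge u -> v iff u \in g v. *)
Definition edge (S : {set V}) (g : {ffun V -> {set V}}) : rel V :=
  fun u v => (v \in S) && (u \in g v).

Definition is_dag (S : {set V}) (k : nat) (g : {ffun V -> {set V}}) : bool :=
  [forall v in S, (g v \subset S :\ v) && (#|g v| <= k)%N] &&
  [forall v, forall u, edge S g u v ==> ~~ connect (edge S g) v u].

Definition score (P : {ffun V -> W} -> R) (S : {set V}) (g : {ffun V -> {set V}}) : R :=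
  - \sum_(v in S) condH P v (g v).

(* Markov equivalence (Verma--Pearl): same skeleton and same v-structures *)
Definition adj (g : {ffun V -> {set V}}) (u v : V) : bool :=
  (u \in g v) || (v \in g u).

Definition vstruct (g : {ffun V -> {set V}}) (u w v : V) : bool :=
  [&& u != w, u \in g v, w \in g v & ~~ adj g u w].

Definition markov_equiv (S : {set V}) (g1 g2 : {ffun V -> {set V}}) : Prop :=
  (forall u v, u \in S -> v \in S -> adj g1 u v = adj g2 u v) /\
  (forall u w v, u \in S -> w \in S -> v \in S -> vstruct g1 u w v = vstruct g2 u w v).

(* the empty DAG (belongs to every G_{d,k}); used only as neutral element *)
Definition empty_dag : {ffun V -> {set V}} := [ffun _ => set0].

Definition Sstar (P : {ffun V -> W} -> R) (k : nat) : R :=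
  \big[Num.max/score P setT empty_dag]_(g : {ffun V -> {set V}} | is_dag setT k g)
     score P setT g.

End Defs.

(* Main.v *)
Require Import Defs.
From HB Require Import structures.
From mathcomp Require Import all_boot all_order all_algebra.
From mathcomp Require Import reals exp.
From mathcomp Require Import ring lra.
Set Implicit Arguments. Unset Strict Implicit. Unset Printing Implicit Defensive.
Import Order.TTheory GRing.Theory Num.Theory.
Local Open Scope ring_scope.

Section Ent.
Variables (R : realType) (V W : finType) (P : {ffun V -> W} -> R).
Hypothesis P0 : forall x, 0 <= P x.
Implicit Types (A B C : {set V}) (x y z : {ffun V -> W}).

Lemma agree_refl A x : agree A x x.
Proof. by apply/forall_inP. Qed.
Lemma agree_sym A x y : agree A x y = agree A y x.
Proof. by apply/forall_inP/forall_inP => H v /H /eqP ->. Qed.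
Lemma agree_trans A x y z : agree A x y -> agree A y z -> agree A x z.
Proof. by move=> /forall_inP H1 /forall_inP H2; apply/forall_inP => v vA; rewrite (eqP (H1 v vA)) H2. Qed.
Lemma agree_sub A B x y : A \subset B -> agree B x y -> agree A x y.
Proof. by move=> /subsetP AB /forall_inP H; apply/forall_inP => v /AB /H. Qed.

Lemma marg_ge0 A x : 0 <= marg P A x.
Proof. by apply: sumr_ge0. Qed.
Lemma marg_geP A x : P x <= marg P A x.
Proof. by rewrite /marg (bigD1 x) ?agree_refl //= lerDl sumr_ge0. Qed.
Lemma marg_agree A x y : agree A x y -> marg P A x = marg P A y.
Proof. by move=> H; apply: eq_bigl => z; apply/idP/idP => Hz; apply: agree_trans Hz _; rewrite // agree_sym. Qed.
Lemma marg_sub A B x : A \subset B -> marg P B x <= marg P A x.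
Proof.
move=> AB; rewrite /marg [X in _ <= X](bigID (agree B ^~ x)) /=.
have -> : \sum_(i | agree A i x && agree B i x) P i = \sum_(i | agree B i x) P i.
  by apply: eq_bigl => i; case H: (agree B i x); rewrite ?andbF ?andbT // (agree_sub AB H).
by rewrite lerDl sumr_ge0.
Qed.

Lemma entropy_mono A B : A \subset B -> entropy P A <= entropy P B.
Proof.
move=> AB; rewrite /entropy lerN2; apply: ler_sum => x _.
have [->|Px] := eqVneq (P x) 0; first by rewrite !mul0r.
have Pp : 0 < P x by rewrite lt_def Px P0.
apply: ler_wpM2l; first exact: P0.
have h1 := marg_geP B x; have h2 := marg_sub x AB.
rewrite ler_ln ?posrE //; [exact: lt_le_trans Pp h1| exact: lt_le_trans Pp (le_trans h1 h2)].
Qed.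

Lemma ln_le_sub1 (t : R) : 0 < t -> ln t <= t - 1.
Proof. by move=> t0; have := @le_ln1Dx R (t - 1); rewrite addrCA subrr addr0; apply; lra. Qed.

Lemma div_le1 (t : R) : 0 <= t -> t / t <= 1.
Proof. by move=> t0; have [->|/divff ->//] := eqVneq t 0; rewrite mul0r. Qed.


Definition glue A y z : {ffun V -> W} := [ffun v => if v \in A then y v else z v].

Lemma glue_iff A B x y z :
  agree A y x && agree B z x = agree (A :&: B) y z && agree (A :|: B) x (glue A y z).
Proof.
apply/andP/andP.
- case=> /forall_inP HA /forall_inP HB; split; apply/forall_inP => v.
    rewrite inE => /andP[vA vB]; by rewrite (eqP (HA v vA)) (eqP (HB v vB)).
  rewrite inE ffunE => /orP[vA|vB]; first by rewrite vA (eqP (HA v vA)).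
  case: ifP => vA; first by rewrite (eqP (HA v vA)).
  by rewrite (eqP (HB v vB)).
- case=> /forall_inP HC /forall_inP HD; split; apply/forall_inP => v vS.
    have := HD v; rewrite inE vS ffunE vS => /(_ isT) /eqP ->; by [].
  have := HD v; rewrite inE vS orbT ffunE => /(_ isT) /eqP ->.
  case: ifP => vA //.
  by have := HC v; rewrite inE vA vS => /(_ isT) /eqP ->.
Qed.

Lemma submod_core A B :
  \sum_x P x * (marg P A x * marg P B x / (marg P (A :|: B) x * marg P (A :&: B) x))
  <= \sum_x P x.
Proof.
set mD := marg P (A :|: B); set mC := marg P (A :&: B).
pose F x y z := (P y * P z / mC y) * (P x / mD x).
have step1 : forall x, P x * (marg P A x * marg P B x / (mD x * mC x)) =
   \sum_y \sum_z (if agree A y x && agree B z x then F x y z else 0).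
  move=> x.
  have e : forall y, agree A y x -> mC y = mC x.
    by move=> y Hy; apply: marg_agree; apply: agree_sub Hy; apply: subsetIl.
  transitivity (\sum_(y | agree A y x) \sum_(z | agree B z x) F x y z).
    rewrite /F [in LHS]/marg.
    rewrite [LHS](_ : _ = (\sum_(y | agree A y x) P y) *
         ((\sum_(z | agree B z x) P z) * (P x / mD x / mC x))); last first.
      by rewrite invfM; ring.
    rewrite big_distrl /=; apply: eq_bigr => y Hy.
    rewrite big_distrl /= big_distrr /=; apply: eq_bigr => z Hz.
    rewrite (e y Hy); ring.
  rewrite big_mkcond /=; apply: eq_bigr => y _.
  case: ifP => Hy /=.
    by rewrite big_mkcond /=; apply: eq_bigr => z _; case: ifP.
  by rewrite big1.
rewrite (eq_bigr _ (fun x _ => step1 x)).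
rewrite exchange_big /=.
rewrite (eq_bigr (fun y => \sum_z \sum_x (if agree A y x && agree B z x then F x y z else 0)));
  last by move=> y _; rewrite exchange_big.
apply: (@le_trans _ _ (\sum_y \sum_z (if agree (A :&: B) y z then P y * P z / mC y else 0))).
  apply: ler_sum => y _; apply: ler_sum => z _.
  under eq_bigr do rewrite glue_iff.
  case: ifP => HC /=; last by rewrite big1.
  rewrite -big_mkcond /= /F -big_distrr /=.
  rewrite -[X in _ <= X]mulr1; apply: ler_wpM2l.
    by apply: divr_ge0; [apply: mulr_ge0| apply: marg_ge0].
  have -> : \sum_(i | agree (A :|: B) i (glue A y z)) P i / mD i =
            \sum_(i | agree (A :|: B) i (glue A y z)) P i / mD (glue A y z).
    by apply: eq_bigr => i Hi; rewrite /mD (marg_agree Hi).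
  by rewrite -big_distrl /=; apply: div_le1; apply: marg_ge0.
apply: ler_sum => y _.
rewrite -big_mkcond /=.
have -> : \sum_(z | agree (A :&: B) y z) P y * P z / mC y = P y * (mC y / mC y).
  rewrite -big_distrl /= -big_distrr /= -mulrA; congr (_ * (_ / _)).
  by rewrite /mC /marg; apply: eq_bigl => z; rewrite agree_sym.
rewrite -[X in _ <= X]mulr1; apply: ler_wpM2l => //.
by apply: div_le1; apply: marg_ge0.
Qed.

Lemma entropy_submod A B :
  entropy P (A :|: B) + entropy P (A :&: B) <= entropy P A + entropy P B.
Proof.
rewrite /entropy -!opprD lerN2 -!big_split /=.
rewrite -subr_ge0 -sumrB.
apply: (@le_trans _ _ (\sum_x (P x - P x * (marg P A x * marg P B x /
    (marg P (A :|: B) x * marg P (A :&: B) x))))).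
  by rewrite sumrB subr_ge0; apply: submod_core.
apply: ler_sum => x _.
have [->|Px] := eqVneq (P x) 0; first by rewrite !mul0r !subrr.
have Pp : 0 < P x by rewrite lt_def Px P0.
have pos S : 0 < marg P S x by apply: lt_le_trans Pp (marg_geP S x).
set a := marg P A x; set b := marg P B x; set d := marg P (A :|: B) x; set c := marg P (A :&: B) x.
have ha := pos A; have hb := pos B; have hd := pos (A :|: B); have hc := pos (A :&: B).
have hr : 0 < a * b / (d * c) by apply: divr_gt0; apply: mulr_gt0.
have := ln_le_sub1 hr.
rewrite ln_div ?posrE ?mulr_gt0 // !lnM ?posrE // => hl.
have : P x * (ln a + ln b - (ln d + ln c)) <= P x * (a * b / (d * c) - 1).
  by apply: ler_wpM2l => //; apply: ltW Pp.
rewrite -/a -/b -/c -/d.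
move=> h; rewrite !mulrDr !mulrN mulr1 in h; lra.
Qed.

Lemma cond_mono A B C : A \subset B ->
  entropy P (C :|: B) - entropy P B <= entropy P (C :|: A) - entropy P A.
Proof.
move=> AB; have h := entropy_submod (C :|: A) B.
have e1 : (C :|: A) :|: B = C :|: B by rewrite -setUA (setUidPr AB).
have m : entropy P A <= entropy P ((C :|: A) :&: B).
  by apply: entropy_mono; rewrite subsetI subsetUr AB.
rewrite e1 in h; lra.
Qed.

Lemma condH_ge0 (v : V) (S : {set V}) : 0 <= condH P v S.
Proof. by rewrite /condH subr_ge0; apply: entropy_mono; apply: subsetUr. Qed.

Lemma fam_bound (y : V) (Pi : {set V}) (a b : V) :
  condH P y ((Pi :\ b) :|: [set a]) <= condH P y Pi + condH P b [set a].
Proof.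
rewrite /condH.
set T' := (Pi :\ b) :|: [set a].
set S := [set b] :|: T'.
have h1 : entropy P ([set y] :|: T') <= entropy P ([set y] :|: S).
  by apply: entropy_mono; apply: setUS; apply: subsetUr.
have cm1 := @cond_mono [set a] T' [set b] (subsetUr _ _).
have PS : Pi \subset S.
  apply/subsetP => v vP; rewrite !inE; case: (eqVneq v b) => //= _.
  by rewrite vP.
have cm2 := @cond_mono Pi S [set y] PS.
lra.
Qed.

Lemma opt2_bound (a b : V) (T : {set V}) : condH P a T <= condH P b T + condH P a [set b].
Proof.
rewrite /condH.
have h1 : entropy P ([set a] :|: T) <= entropy P ([set a] :|: ([set b] :|: T)).
  by apply: entropy_mono; apply: setUS; apply: subsetUr.
have cm := @cond_mono [set b] ([set b] :|: T) [set a] (subsetUl _ _).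
lra.
Qed.

End Ent.

Section Dag.
Variables (V : finType).
Implicit Types (S : {set V}) (g : {ffun V -> {set V}}).

Lemma connect_rank (e : rel V) (r : V -> nat) x y :
  (forall u v, e u v -> r u < r v)%N -> connect e x y -> (r x <= r y)%N.
Proof.
move=> hr /connectP [p]; elim: p x => [|z p IH] x /=; first by move=> _ ->.
case/andP => exz pz ly; apply: leq_trans (ltnW (hr _ _ exz)) (IH _ pz ly).
Qed.

Lemma rank_acyclic S g (r : V -> nat) :
  (forall u v, v \in S -> u \in g v -> r u < r v)%N ->
  [forall v, forall u, edge S g u v ==> ~~ connect (edge S g) v u].
Proof.
move=> hr; apply/forallP => v; apply/forallP => u; apply/implyP => /andP [vS uv].
apply/negP => c.
have h1 := connect_rank (r := r) (e := edge S g) (fun u v => fun h => let: conj a b := andP h in hr u v a b) c.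
have := hr u v vS uv; by rewrite ltnNge h1.
Qed.

Lemma dag_rank S k g : is_dag S k g ->
  exists r : V -> nat, forall u v, v \in S -> u \in g v -> (r u < r v)%N.
Proof.
move=> /andP [_ /forallP H].
exists (fun v => #|[set w | connect (edge S g) w v]|) => u v vS uv.
have e : edge S g u v by rewrite /edge vS uv.
have nc := implyP (forallP (H v) u) e.
apply: proper_card; apply/properP; split.
  apply/subsetP => w; rewrite !inE => c; exact: connect_trans c (connect1 e).
by exists v; rewrite inE ?connect0 //; apply: nc.
Qed.

End Dag.

Unset Implicit Arguments.
Set Strict Implicit.

Theorem lemma9 (R : realType) (V W : finType) (k : nat) (a b : V)
  (P : {ffun V -> W} -> R) (Q : {ffun V -> W} -> bool -> R)
  (alpha beta lambda : R) (G : {ffun V -> {set V}}) :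
  (0 < k)%N ->
  (* X_1 = V \ {X_b}, contains X_a, has at least k variables *)
  a != b ->
  (k <= #|[set~ b]|)%N ->
  0 < alpha -> 0 < beta ->
  (* (I) unique optimal EC (represented by G0) with gap beta, and
     (II) X_a has no children in any structure of that EC *)
  (exists G0 : {ffun V -> {set V}},
     [/\ is_dag [set~ b] k G0,
         (forall G', is_dag [set~ b] k G' ->
            score P [set~ b] G' <= score P [set~ b] G0),
         (forall G', is_dag [set~ b] k G' -> ~ markov_equiv [set~ b] G' G0 ->
            score P [set~ b] G' <= score P [set~ b] G0 - beta) &
         (forall G', is_dag [set~ b] k G' -> markov_equiv [set~ b] G' G0 ->
            forall v, v \in [set~ b] -> a \notin G' v)]) ->
  (* (III) *)
  condH P a ([set~ b] :\ a) = alpha ->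
  (* lambda in (0, min(alpha, beta/(3d))) *)
  0 < lambda -> lambda < alpha -> lambda < beta / (3 * #|V|%:R) ->
  (* (IV) joint law Q of (X, C), C a hidden Bernoulli variable; P is the X-marginal *)
  (forall x c, 0 <= Q x c) ->
  \sum_(x : {ffun V -> W}) \sum_(c : bool) Q x c = 1 ->
  (forall x, P x = Q x true + Q x false) ->
  (* C independent of X_1 *)
  (forall (u : {ffun V -> W}) (c : bool),
     \sum_(x : {ffun V -> W} | agree [set~ b] x u) Q x c =
     (\sum_(x : {ffun V -> W} | agree [set~ b] x u) P x) * (\sum_(x : {ffun V -> W}) Q x c)) ->
  (* P[X_b = X_a | C = 1] = 1 *)
  \sum_(x : {ffun V -> W} | x b != x a) Q x true = 0 ->
  (* X_b independent of X_1 given C = 0 *)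
  (forall (u : {ffun V -> W}) (w : W),
     (\sum_(x : {ffun V -> W} | agree [set~ b] x u && (x b == w)) Q x false) *
       (\sum_(x : {ffun V -> W}) Q x false) =
     (\sum_(x : {ffun V -> W} | agree [set~ b] x u) Q x false) *
       (\sum_(x : {ffun V -> W} | x b == w) Q x false)) ->
  (* (V) *)
  Num.max (condH P b [set a]) (condH P a [set b]) = lambda ->
  (* G in G_{d,k}, and X_a or X_b has a child other than X_a, X_b *)
  is_dag setT k G ->
  (exists y, [/\ y != a, y != b & (a \in G y) || (b \in G y)]) ->
  score P setT G < Sstar P k - beta + 3 * #|V|%:R * lambda.
Proof.
move=> k0 ab kle al0 be0 [G0 [dag0 opt gap ec]] hIII la0 lalpha lbeta Q0 Qsum PQ
  indep Qtrue Qcond hmax dagG [y [ya yb yab]].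
have P0 : forall x, 0 <= P x by move=> x; rewrite PQ addr_ge0.
have hba : condH P b [set a] <= lambda by rewrite -hmax le_max lexx.
have hab : condH P a [set b] <= lambda by rewrite -hmax le_max lexx orbT.
have [r hr] := dag_rank dagG.
have [r0 hr0] := dag_rank dag0.
have famG : forall v, G v \subset setT :\ v /\ (#|G v| <= k)%N.
  move=> v; move: dagG => /andP [/forall_inP H _].
  by case/andP: (H v (in_setT v)).
have fam0 : forall v, v \in [set~ b] -> G0 v \subset [set~ b] :\ v /\ (#|G0 v| <= k)%N.
  move=> v vS; move: dag0 => /andP [/forall_inP H _].
  by case/andP: (H v vS).
have hG : forall u v, u \in G v -> u != v.
  move=> u v uv; have [/subsetP s _] := famG v; have := s u uv.
  by rewrite in_setD1 => /andP [].
have hrG : forall u v, u \in G v -> (r u < r v)%N by move=> u v; apply: hr; apply: in_setT.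
have bGa : (r a <= r b)%N -> b \notin G a.
  by move=> h; apply/negP => /hrG; rewrite ltnNge h.
have aGb : ~~ (r a <= r b)%N -> a \notin G b.
  by move=> h; apply/negP => /hrG; move: h; rewrite -ltnNge => h1 h2; move: (ltn_trans h1 h2); rewrite ltnn.
pose G' : {ffun V -> {set V}} := [ffun v => if v == a then (if (r a <= r b)%N then G a else G b)
   else if b \in G v then (G v :\ b) :|: [set a] else G v].
have dag' : is_dag [set~ b] k G'.
  apply/andP; split.
    apply/forall_inP => v vS; rewrite ffunE.
    have vb : v != b by rewrite -in_setC1.
    case: eqVneq => [->|va].
      case: ifP => hrab.
        have [_ c] := famG a; rewrite c andbT; apply/subsetP => u uG.
        rewrite in_setD1 in_setC1 (hG _ _ uG) /=.
        by apply/eqP => ub; move: (bGa hrab); rewrite -ub uG.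
      have [_ c] := famG b; rewrite c andbT; apply/subsetP => u uG.
      rewrite in_setD1 in_setC1 (hG _ _ uG) andbT.
      by apply/eqP => ua; move: (aGb (negbT hrab)); rewrite -ua uG.
    case: ifP => bin.
      apply/andP; split.
        apply/subsetP => u; rewrite in_setU in_set1 in_setD1 => /orP [/andP [ub uG]|/eqP ->].
          by rewrite in_setD1 in_setC1 ub (hG _ _ uG).
        by rewrite in_setD1 in_setC1 ab eq_sym va.
      have [_ c] := famG v.
      apply: leq_trans (leq_card_setU _ _).1 _.
      by rewrite cards1 addn1 -add1n; move: c; rewrite (cardsD1 b (G v)) bin.
    have [_ c] := famG v; rewrite c andbT; apply/subsetP => u uG.
    rewrite in_setD1 in_setC1 (hG _ _ uG) /=.
    by apply/eqP => ub; move: bin; rewrite -ub uG.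
  apply: (@rank_acyclic _ _ _ (fun u => if u == a then minn (r a) (r b) else r u)).
  move=> u v vS; rewrite ffunE.
  have vb : v != b by rewrite -in_setC1.
  have [va|va] := eqVneq v a.
    subst v.
    case: ifP => hrab uG.
      rewrite (negbTE (hG _ _ uG)) leq_min (hrG _ _ uG) /=.
      exact: leq_trans (hrG _ _ uG) hrab.
    have ua : u != a by apply/eqP => ua; move: (aGb (negbT hrab)); rewrite -ua uG.
    rewrite (negbTE ua) leq_min (hrG _ _ uG) andbT.
    by apply: ltn_trans (hrG _ _ uG) _; rewrite ltnNge hrab.
  case: ifP => bin.
    rewrite in_setU in_set1 in_setD1 => /orP [/andP [ub uG]|/eqP ->].
      case: eqVneq => [ua|_]; last by apply: hrG.
      by subst u; apply: leq_ltn_trans (geq_minl _ _) (hrG _ _ uG).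
    by rewrite eqxx; apply: leq_ltn_trans (geq_minr _ _) (hrG _ _ bin).
  move=> uG; case: eqVneq => [ua|_]; last by apply: hrG.
  by subst u; apply: leq_ltn_trans (geq_minl _ _) (hrG _ _ uG).
have yS : y \in [set~ b] by rewrite in_setC1.
have aG'y : a \in G' y.
  rewrite ffunE (negbTE ya); case: ifP => bin; first by rewrite in_setU in_set1 eqxx orbT.
  by move: yab; rewrite bin orbF.
have nme : ~ markov_equiv [set~ b] G' G0.
  by move=> me; move: (ec G' dag' me y yS); rewrite aG'y.
have s' := gap G' dag' nme.
have sumC1 : forall F : V -> R, \sum_(v in [set~ b]) F v = \sum_(v | v != b) F v.
  by move=> F; apply: eq_bigl => v; rewrite in_setC1.
have sumT : forall F : V -> R, \sum_(v in [set: V]) F v = F b + \sum_(v | v != b) F v.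
  move=> F; rewrite (bigD1 b) ?in_setT //=; congr (_ + _); apply: eq_bigl => v.
  by rewrite in_setT.
have sumTa : forall F : V -> R, \sum_(v | v != b) F v = F a + \sum_(v | (v != b) && (v != a)) F v.
  by move=> F; rewrite (bigD1 a) //=.
have la0' : 0 <= lambda by apply: ltW.
have sG : score P setT G <= score P [set~ b] G' + #|V|%:R * lambda.
  rewrite /score sumC1 sumT.
  have h1 : \sum_(v | v != b) condH P v (G' v) <=
      \sum_(v | v != b) (condH P v (G v) + lambda) + condH P b (G b).
    rewrite !sumTa.
    have hcb := condH_ge0 P0 b (G b); have hca := condH_ge0 P0 a (G a).
    have ha : condH P a (G' a) <= condH P a (G a) + lambda + condH P b (G b).
      rewrite ffunE eqxx; case: ifP => _; first lra.
      have := opt2_bound P0 a b (G b); lra.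
    suff : \sum_(v | (v != b) && (v != a)) condH P v (G' v) <=
           \sum_(v | (v != b) && (v != a)) (condH P v (G v) + lambda) by lra.
    apply: ler_sum => v /andP [vb va]; rewrite ffunE (negbTE va).
    case: ifP => _; last lra.
    have := fam_bound P0 v (G v) a b; lra.
  have h2 : \sum_(v | v != b) lambda <= #|V|%:R * lambda.
    rewrite mulr_natl; have := sumT (fun _ => lambda); rewrite sumr_const cardsT => ->; lra.
  rewrite [X in _ <= X + _]big_split /= in h1.
  have := condH_ge0 P0 b (G b); lra.
have sstar : score P [set~ b] G0 - lambda <= Sstar P k.
  pose G0e : {ffun V -> {set V}} := [ffun v => if v == b then [set a] else G0 v].
  have dage : is_dag setT k G0e.
    apply/andP; split.
      apply/forall_inP => v _; rewrite ffunE; case: eqVneq => [->|vb].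
        rewrite cards1 k0 andbT; apply/subsetP => u; rewrite in_set1 => /eqP ->.
        by rewrite in_setD1 in_setT andbT.
      have vS : v \in [set~ b] by rewrite in_setC1.
      have [/subsetP s c] := fam0 v vS; rewrite c andbT.
      apply/subsetP => u /s; rewrite !in_setD1 in_setT andbT => /andP [] //.
    apply: (@rank_acyclic _ _ _ (fun u => if u == b then (r0 a).+1 else r0 u)).
    move=> u v _; rewrite ffunE; have [vb|vb] := eqVneq v b.
      subst v.
      by rewrite in_set1 => /eqP ->; rewrite (negbTE ab).
    move=> uG; have vS : v \in [set~ b] by rewrite in_setC1.
    have [/subsetP s _] := fam0 v vS.
    have := s u uG; rewrite in_setD1 in_setC1 => /andP [_ ub].
    by rewrite (negbTE ub); apply: hr0 => //; rewrite in_setC1.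
  rewrite /Sstar; apply: le_trans (le_bigmax_cond _ (score P setT) dage).
  rewrite /score sumT sumC1 ffunE eqxx.
  have -> : \sum_(v | v != b) condH P v (G0e v) = \sum_(v | v != b) condH P v (G0 v).
    by apply: eq_bigr => v vb; rewrite ffunE (negbTE vb).
  lra.
have d1 : 1 <= #|V|%:R :> R.
  by rewrite ler1n; apply/card_gt0P; exists a.
have key : #|V|%:R * lambda + lambda < 3 * #|V|%:R * lambda by nra.
lra.
Qed.
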